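(* Let $X_n\in L_G^{1^*}(\Omega)$ with $X_n\ge Y$ for all $n\ge1$, where $Y\in\mathbb{L}^1(\Omega)$. Then $\liminf_{n\to\infty}X_n\in\mathcal{L}_G^{1^*_*}(\Omega)$.
   Context: $\Omega=C_0^d(\mathbb{R}^+)$ is the space of continuous paths $\omega:[0,\infty)\to\mathbb{R}^d$ with $\omega_0=0$, $B$ the canonical process, $\hat{\mathbb{E}}$ the $G$-expectation ($G$ a monotone sublinear function on $d\times d$ symmetric matrices). $L^1_G(\Omega)$ is the completion of bounded Lipschitz cylinder functions $\varphi(B_{t_1},\dots,B_{t_n})$ under $\hat{\mathbb{E}}[|\cdot|]$. $\mathcal{P}$ is a weakly compact set of probability measures representing $\hat{\mathbb{E}}$, $\hat{\mathbb{E}}[X]=\sup_{P\in\mathcal{P}}E_P[X]$ for Borel $X$, $c(A)=\sup_{P\in\mathcal{P}}P(A)$, q.s. = outside a capacity-zero set. $L^0(\Omega)$ is the set of Borel maps $\Omega\to[-\infty,\infty]$; $\mathbb{L}^1(\Omega)=\{X\in L^0(\Omega):\hat{\mathbb{E}}[|X|]<\infty\}$; $L_G^{1^*}(\Omega)=\{X\in\mathbb{L}^1(\Omega):\exists X_n\in L^1_G(\Omega),X_n\downarrow X\text{ q.s.}\}$; $\mathcal{L}_G^{1^*_*}(\Omega)=\{X\in L^0(\Omega):\exists X_n\in L_G^{1^*}(\Omega),X_n\uparrow X\text{ q.s.}\}$. *)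

(* Defs.v *)
From HB Require Import structures.
From mathcomp Require Import all_boot all_order all_algebra.
From mathcomp Require Import all_classical all_reals all_analysis.
From mathcomp Require Import measurable_realfun.
Set Implicit Arguments. Unset Strict Implicit. Unset Printing Implicit Defensive.
Import Order.TTheory GRing.Theory Num.Theory.
Import numFieldNormedType.Exports.
Local Open Scope classical_set_scope.
Local Open Scope ring_scope.


(* Omega = C_0^d(R^+): continuous paths w : [0,oo) -> R^d with w_0 = 0,
   encoded as continuous w : R -> R^d (row vectors) that vanish on (-oo,0]
   (a bijective encoding: extend every path by 0 on negative times). *)
Record Omega (R : realType) (d : nat) := MkPath {
  pval : R -> 'rV[R]_d ;
  pcont : continuous pval ;
  pneg : forall t : R, t <= 0 -> pval t = 0 }.

Definition zero_path (R : realType) (d : nat) : Omega R d :=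
  @MkPath R d (fun _ => 0) (fun x => @cst_continuous R 'rV[R]_d 0 x) (fun _ _ => erefl).

HB.instance Definition _ (R : realType) (d : nat) := gen_eqMixin (Omega R d).
HB.instance Definition _ (R : realType) (d : nat) := gen_choiceMixin (Omega R d).
HB.instance Definition _ (R : realType) (d : nat) := isPointed.Build (Omega R d) (zero_path R d).

Definition Omega_open (R : realType) (d : nat) (A : set (Omega R d)) : Prop :=
  forall w, A w -> exists N : R, exists e : R, 0 < e /\
    forall w' : Omega R d,
      (forall t : R, 0 <= t <= N -> `|pval w' t - pval w t| <= e) -> A w'.

Notation OmegaB R d := (g_sigma_algebraType (@Omega_open R d)).

Definition Omega_continuous (R : realType) (d : nat) (f : OmegaB R d -> R) : Prop :=
  forall (w : Omega R d) (eps : R), 0 < eps -> exists N : R, exists del : R, 0 < del /\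
    forall w' : Omega R d,
      (forall t : R, 0 <= t <= N -> `|pval w' t - pval w t| <= del) ->
      `|f w' - f w| < eps.

Local Open Scope ereal_scope.

Definition weak_cvg (R : realType) (d : nat) (Pn : nat -> probability (OmegaB R d) R)
    (P : probability (OmegaB R d) R) : Prop :=
  forall f : OmegaB R d -> R,
    (exists M : R, forall w, (`|f w| <= M)%R) -> Omega_continuous f ->
    (\int[Pn n]_w (f w)%:E) @[n --> \oo] --> \int[P]_w (f w)%:E.

Definition weakly_compact (R : realType) (d : nat) (Pset : set (probability (OmegaB R d) R)) : Prop :=
  forall Pn : nat -> probability (OmegaB R d) R, (forall n, Pset (Pn n)) ->
    exists phi : nat -> nat, {homo phi : m n / (m < n)%N >-> (m < n)%N} /\
    exists P, Pset P /\ weak_cvg (Pn \o phi) P.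

Definition Ehat (R : realType) (d : nat) (Pset : set (probability (OmegaB R d) R))
    (X : OmegaB R d -> \bar R) : \bar R :=
  ereal_sup [set \int[P]_w X w | P in Pset].

Definition cap (R : realType) (d : nat) (Pset : set (probability (OmegaB R d) R))
    (A : set (OmegaB R d)) : \bar R :=
  ereal_sup [set P A | P in Pset].

Definition qs (R : realType) (d : nat) (Pset : set (probability (OmegaB R d) R))
    (Pr : OmegaB R d -> Prop) : Prop :=
  exists A : set (OmegaB R d), measurable A /\ cap Pset A = 0 /\
    forall w, ~ A w -> Pr w.

Definition is_cylinder (R : realType) (d : nat) (f : OmegaB R d -> \bar R) : Prop :=
  exists n : nat, exists t : 'I_n -> R, exists phi : 'M[R]_(n, d) -> R,
    (forall i, (0 <= t i)%R) /\
    (exists M : R, forall x, (`|phi x| <= M)%R) /\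
    (exists L : R, forall x y, (`|phi x - phi y| <= L * `|x - y|)%R) /\
    f = (fun w : OmegaB R d => (phi (\matrix_(i < n, j < d) pval w (t i) 0 j))%:E).

Definition L0 (R : realType) (d : nat) (X : OmegaB R d -> \bar R) : Prop :=
  measurable_fun setT X.

Definition LL1 (R : realType) (d : nat) (Pset : set (probability (OmegaB R d) R))
    (X : OmegaB R d -> \bar R) : Prop :=
  L0 X /\ Ehat Pset (fun w => `|X w|) < +oo.

(* L^1_G(Omega): the E^[|.|]-completion of the cylinder functions, realised
   as the Borel maps that are E^[|.|]-limits of cylinder functions. *)
Definition L1G (R : realType) (d : nat) (Pset : set (probability (OmegaB R d) R))
    (X : OmegaB R d -> \bar R) : Prop :=
  L0 X /\ exists phi : nat -> OmegaB R d -> \bar R,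
    (forall k, is_cylinder (phi k)) /\
    Ehat Pset (fun w => `|X w - phi k w|) @[k --> \oo] --> 0.

Definition L1Gstar (R : realType) (d : nat) (Pset : set (probability (OmegaB R d) R))
    (X : OmegaB R d -> \bar R) : Prop :=
  LL1 Pset X /\ exists Xn : nat -> OmegaB R d -> \bar R,
    (forall n, L1G Pset (Xn n)) /\
    qs Pset (fun w => (forall n, Xn n.+1 w <= Xn n w) /\
                      Xn n w @[n --> \oo] --> X w).

Definition L1Gstarstar (R : realType) (d : nat) (Pset : set (probability (OmegaB R d) R))
    (X : OmegaB R d -> \bar R) : Prop :=
  L0 X /\ exists Xn : nat -> OmegaB R d -> \bar R,
    (forall n, L1Gstar Pset (Xn n)) /\
    qs Pset (fun w => (forall n, Xn n w <= Xn n.+1 w) /\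
                      Xn n w @[n --> \oo] --> X w).

(* Main.v *)
Require Import Defs.
From HB Require Import structures.
From mathcomp Require Import all_boot all_order all_algebra.
From mathcomp Require Import all_classical all_reals all_analysis.
From mathcomp Require Import measurable_realfun.
From mathcomp Require Import lra.
Import Order.TTheory GRing.Theory Num.Theory.
Import numFieldNormedType.Exports.
Set Implicit Arguments. Unset Strict Implicit.
Local Open Scope classical_set_scope.
Local Open Scope ring_scope.

Lemma mx_entry_le (R : realType) m n (x : 'M[R]_(m, n)) i j : `|x i j| <= `|x|.
Proof.
have -> : `|x| = mx_norm x by [].
rewrite mx_normrE.
by apply: (le_bigmax _ _ (i, j)).
Qed.

Lemma mx_le (R : realType) m n (x : 'M[R]_(m, n)) c :
  0 <= c -> (forall i j, `|x i j| <= c) -> `|x| <= c.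
Proof.
move=> c0 H; have -> : `|x| = mx_norm x by [].
rewrite mx_normrE; apply: bigmax_le => // -[i j] _; exact: H.
Qed.

Lemma min_lip (R : realType) (a b a' b' : R) :
  `|Num.min a b - Num.min a' b'| <= `|a - a'| + `|b - b'|.
Proof.
have h1 := ler_norm (a - a'); have h2 := ler_norm (a' - a).
have h3 := ler_norm (b - b'); have h4 := ler_norm (b' - b).
rewrite distrC in h2; rewrite distrC in h4.
case: (leP a b) => ab; case: (leP a' b') => ab'; rewrite ler_norml; apply/andP; split; lra.
Qed.

Lemma usub_le (R : realType) m1 m2 n (x : 'M[R]_(m1 + m2, n)) : `|usubmx x| <= `|x|.
Proof. apply: mx_le => // i j; rewrite mxE; exact: mx_entry_le. Qed.
Lemma dsub_le (R : realType) m1 m2 n (x : 'M[R]_(m1 + m2, n)) : `|dsubmx x| <= `|x|.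
Proof. apply: mx_le => // i j; rewrite mxE; exact: mx_entry_le. Qed.

Lemma Omega_open_meas (R : realType) (d : nat) (A : set (OmegaB R d)) :
  Omega_open A -> measurable A.
Proof. move=> oA; exact: sub_sigma_algebra. Qed.

Lemma Ocont_meas (R : realType) (d : nat) (f : OmegaB R d -> R) :
  Omega_continuous f -> measurable_fun setT f.
Proof.
move=> cf; apply: (measurability _ (RGenOpens.measurableE R)).
move=> _ [_ [x [y ->]] <-]; rewrite setTI; apply: Omega_open_meas.
move=> w /=; rewrite in_itv /= => /andP[xf fy].
have e0 : 0 < Order.min (f w - x) (y - f w) by rewrite lt_min !subr_gt0 xf fy.
have [N [del [del0 H]]] := cf w _ e0.
exists N, del; split => // w' /H; rewrite lt_min => /andP[h1 h2].
rewrite in_itv /=; apply/andP; split.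
- move: h1; rewrite ltr_norml => /andP[h _]; lra.
- move: h2; rewrite ltr_norml => /andP[_ h]; lra.
Qed.
Lemma cyl_cont (R : realType) (d n : nat) (t : 'I_n -> R) (phi : 'M[R]_(n, d) -> R) L :
  (forall i, 0 <= t i) ->
  (forall x y, `|phi x - phi y| <= L * `|x - y|) ->
  Omega_continuous (fun w : OmegaB R d => phi (\matrix_(i < n, j < d) pval w (t i) 0 j)).
Proof.
move=> t0 Lip w eps e0.
exists (\big[Order.max/0]_i t i), (eps / (`|L| + 1)); split.
  by rewrite divr_gt0 // ltr_wpDl.
move=> w' H.
apply: (le_lt_trans (Lip _ _)).
have Hm : `|(\matrix_(i < n, j < d) pval w' (t i) 0 j) - \matrix_(i < n, j < d) pval w (t i) 0 j| <= eps / (`|L| + 1).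
  apply: mx_le; first by rewrite divr_ge0 // ?ltW // addr_ge0.
  move=> i j; rewrite !mxE.
  have := H (t i); rewrite t0 /= => /(_ (le_bigmax _ _ i)) h.
  apply: le_trans h.
  rewrite (_ : pval w' (t i) 0 j - pval w (t i) 0 j = (pval w' (t i) - pval w (t i)) 0 j); last by rewrite !mxE.
  exact: mx_entry_le.
apply: (le_lt_trans (y := `|L| * (eps / (`|L| + 1)))).
  apply: (le_trans (ler_norm _)) => /=.
  rewrite (le_trans (y := `|L| * `|(\matrix_(i < n, j < d) pval w' (t i) 0 j) - \matrix_(i < n, j < d) pval w (t i) 0 j|)) //.
    by rewrite normrM normr_id.
  by apply: ler_wpM2l.
have hL : 0 < `|L| + 1 by rewrite ltr_wpDl.
rewrite mulrA ltr_pdivrMr // mulrDr mulr1 mulrC ltrDl.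
exact: e0.
Qed.
Local Open Scope ereal_scope.
Lemma cyl_min (R : realType) (d : nat) (f g : OmegaB R d -> \bar R) :
  is_cylinder f -> is_cylinder g -> is_cylinder (fun w => mine (f w) (g w)).
Proof.
move=> [n1 [t1 [phi1 [t10 [[M1 hM1] [[L1 hL1] ->]]]]]].
move=> [n2 [t2 [phi2 [t20 [[M2 hM2] [[L2 hL2] ->]]]]]].
pose t (i : 'I_(n1 + n2)) := match fintype.split i with inl a => t1 a | inr b => t2 b end.
exists (n1 + n2)%N, t, (fun M => Num.min (phi1 (usubmx M)) (phi2 (dsubmx M))).
split; first by move=> i; rewrite /t; case: (fintype.split i).
split.
  exists (`|M1| + `|M2|)%R => x.
  have a1 := hM1 (usubmx x); have a2 := hM2 (dsubmx x).
  have b1 := ler_norm M1; have b2 := ler_norm M2.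
  move: a1 a2; rewrite !ler_norml => /andP[? ?] /andP[? ?].
  case: (leP (phi1 (usubmx x)) (phi2 (dsubmx x))) => _; apply/andP; split; lra.
split.
  exists (`|L1| + `|L2|)%R => x y.
  eapply le_trans; first exact: min_lip.
  rewrite mulrDl; apply: lerD.
    apply: (le_trans (hL1 _ _)); apply: (le_trans (ler_wpM2r (normr_ge0 _) (ler_norm L1))).
    apply: ler_wpM2l => //; rewrite -linearB; exact: usub_le.
  apply: (le_trans (hL2 _ _)); apply: (le_trans (ler_wpM2r (normr_ge0 _) (ler_norm L2))).
  apply: ler_wpM2l => //; rewrite -linearB; exact: dsub_le.
apply/funext => w /=; rewrite -EFin_min; congr (EFin (Num.min (phi1 _) (phi2 _))).
  apply/matrixP => i j; rewrite !mxE /t.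
  by rewrite (unsplitK (inl i : 'I_n1 + 'I_n2)).
apply/matrixP => i j; rewrite !mxE /t.
by rewrite (unsplitK (inr i : 'I_n1 + 'I_n2)).
Qed.
Section Eh.
Variables (R : realType) (d : nat) (Pset : set (probability (OmegaB R d) R)).

Lemma Ehat_ge0 (f : OmegaB R d -> \bar R) : Pset !=set0 -> (forall w, 0 <= f w) -> 0 <= Ehat Pset f.
Proof.
move=> [P PP] f0.
have h : \int[P]_w f w <= Ehat Pset f by apply: ereal_sup_ubound; exists P.
by apply: le_trans h; apply: integral_ge0 => w _; exact: f0.
Qed.

Lemma Ehat_le (f g : OmegaB R d -> \bar R) : (forall w, 0 <= f w) ->
  measurable_fun setT f -> measurable_fun setT g -> (forall w, f w <= g w) ->
  Ehat Pset f <= Ehat Pset g.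
Proof.
move=> f0 mf mg fg; apply: ge_ereal_sup => _ [P PP <-].
have h : \int[P]_w g w <= Ehat Pset g by apply: ereal_sup_ubound; exists P.
apply: le_trans h.
by apply: ge0_le_integral.
Qed.

Lemma Ehat_add (f g : OmegaB R d -> \bar R) : (forall w, 0 <= f w) -> (forall w, 0 <= g w) ->
  measurable_fun setT f -> measurable_fun setT g ->
  Ehat Pset (fun w => f w + g w) <= Ehat Pset f + Ehat Pset g.
Proof.
move=> f0 g0 mf mg; apply: ge_ereal_sup => _ [P PP <-].
rewrite ge0_integralD //=.
by apply: leeD; apply: ereal_sup_ubound; exists P.
Qed.

Lemma cap0 (A : set (OmegaB R d)) (P : probability (OmegaB R d) R) :
  Pset P -> cap Pset A = 0 -> P A = 0.
Proof.
move=> PP cA; apply/eqP; rewrite eq_le measure_ge0 andbT -cA.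
by apply: ereal_sup_ubound; exists P.
Qed.

Lemma cap_bigcup (A : nat -> set (OmegaB R d)) : Pset !=set0 -> (forall k, measurable (A k)) ->
  (forall k, cap Pset (A k) = 0) -> cap Pset (\bigcup_k A k) = 0.
Proof.
move=> [Q QQ] mA cA; apply/eqP; rewrite eq_le; apply/andP; split; last first.
  apply: le_trans (measure_ge0 Q (\bigcup_k A k)) _.
  by apply: ereal_sup_ubound; exists Q.
apply: ge_ereal_sup => _ [P PP <-].
apply: le_trans (measure_sigma_subadditive _ _ _ _) _ => //.
  exact: bigcupT_measurable.
by rewrite eseries0 // => k _ _; exact: (cap0 PP (cA k)).
Qed.
End Eh.

Lemma cyl_meas (R : realType) (d : nat) (f : OmegaB R d -> \bar R) :
  is_cylinder f -> measurable_fun setT f.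
Proof.
move=> [n [t [phi [t0 [_ [[L hL] ->]]]]]].
have := @Ocont_meas R d _ (@cyl_cont R d n t phi L t0 hL); move/(measurable_EFinP setT).
exact.
Qed.

Lemma cyl_fin (R : realType) (d : nat) (f : OmegaB R d -> \bar R) :
  is_cylinder f -> forall w, f w \is a fin_num.
Proof. by move=> [n [t [phi [t0 [_ [[L hL] ->]]]]]]. Qed.

Lemma emin_lip (R : realType) (a b c e : \bar R) : c \is a fin_num -> e \is a fin_num ->
  `|mine a b - mine c e| <= `|a - c| + `|b - e|.
Proof.
case: c => // c _; case: e => // e _.
case: a => [a||]; case: b => [b||] //=.
- rewrite -!EFin_min -EFinB -EFinD /= lee_fin; exact: min_lip.
all: rewrite ?addey ?addye //.
all: try exact: leey.
all: by rewrite -EFin_min.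
Qed.

Lemma mabs_sub (R : realType) (d : nat) (f g : OmegaB R d -> \bar R) :
  measurable_fun setT f -> measurable_fun setT g -> measurable_fun setT (fun w => `|f w - g w|).
Proof.
move=> mf mg; apply: (measurableT_comp (@abse_measurable R setT)).
exact: emeasurable_funB.
Qed.

Lemma L1G_min (R : realType) (d : nat) (Pset : set (probability (OmegaB R d) R))
  (Pne : Pset !=set0) (a b : OmegaB R d -> \bar R) :
  L1G Pset a -> L1G Pset b -> L1G Pset (fun w => mine (a w) (b w)).
Proof.
move=> [ma [phi [cphi hphi]]] [mb [psi [cpsi hpsi]]].
split; first exact: measurable_mine.
exists (fun k w => mine (phi k w) (psi k w)); split; first by move=> k; exact: cyl_min.
apply: (@squeeze_cvge _ _ _ _ (fun=> 0) _ (fun k => Ehat Pset (fun w => `|a w - phi k w|) + Ehat Pset (fun w => `|b w - psi k w|))).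
- apply: nearW => k; apply/andP; split.
    by apply: Ehat_ge0 => // w; exact: abse_ge0.
  have mp := cyl_meas (cphi k); have mq := cyl_meas (cpsi k).
  apply: le_trans (Ehat_add _ _ _ _ _) => //.
  + apply: Ehat_le.
    * by move=> w; exact: abse_ge0.
    * by apply: mabs_sub; exact: measurable_mine.
    * by apply: emeasurable_funD; exact: mabs_sub.
    * move=> w; apply: emin_lip; [exact: cyl_fin (cphi k) w|exact: cyl_fin (cpsi k) w].
  + exact: mabs_sub.
  + exact: mabs_sub.
- exact: cvg_cst.
- rewrite -(adde0 0); apply: cvgeD => //.
Qed.

Section Minup.
Variables (R : realType) (d : nat).
Fixpoint minup (F : nat -> OmegaB R d -> \bar R) (m : nat) (w : OmegaB R d) : \bar R :=
  match m with 0 => F 0%N w | m'.+1 => mine (minup F m' w) (F m'.+1 w) end.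

Lemma minup_le F m w i : (i <= m)%N -> minup F m w <= F i w.
Proof.
elim: m => [|m IH] /=; first by rewrite leqn0 => /eqP ->.
rewrite leq_eqVlt => /orP[/eqP ->|]; first by rewrite ge_min lexx orbT.
by rewrite ltnS => /IH h; rewrite ge_min h.
Qed.

Lemma minup_ge F m w c : (forall i, (i <= m)%N -> c <= F i w) -> c <= minup F m w.
Proof.
elim: m => [|m IH] /= H; first exact: H.
rewrite le_min IH ?H // => i im; apply: H; exact: leqW.
Qed.

Lemma minup_mono F G m w : (forall i, F i w <= G i w) -> minup F m w <= minup G m w.
Proof.
move=> H; apply: minup_ge => i im; apply: le_trans (minup_le _ _ im) (H i).
Qed.

Lemma L1G_minup (Pset : set (probability (OmegaB R d) R)) (Pne : Pset !=set0) F m :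
  (forall i, L1G Pset (F i)) -> L1G Pset (minup F m).
Proof.
move=> H; elim: m => [|m IH] /=; first exact: H.
exact: (L1G_min Pne IH (H m.+1)).
Qed.
End Minup.

Theorem proposition3p20 (R : realType) (d : nat)
  (Pset : set (probability (OmegaB R d) R))
  (Pne : Pset !=set0) (Pcpt : weakly_compact Pset)
  (X : nat -> OmegaB R d -> \bar R) (Y : OmegaB R d -> \bar R) :
  (forall n, L1Gstar Pset (X n)) ->
  LL1 Pset Y ->
  (forall n w, Y w <= X n w) ->
  L1Gstarstar Pset (fun w => limn_einf (fun n => X n w)).
Proof.
move=> hX hY hYX.
have [V hV] := choice (fun k => (hX k).2).
have [A hA] := choice (fun k => (hV k).2).
have mX k : measurable_fun setT (X k) := (hX k).1.1.
pose Z n w := einfs (fun k => X k w) n.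
have mZ n : measurable_fun setT (Z n) := measurable_fun_einfs mX n.
have ZX n w : Z n w <= X n w by apply: ereal_inf_lbound; exists n => /=.
have YZ n w : Y w <= Z n w by apply: le_ereal_inf_tmp => _ [k _ <-]; exact: hYX.
have absZ n w : `|Z n w| <= `|Y w| + `|X n w|.
  case: (leP 0 (Z n w)) => z0.
    rewrite gee0_abs //; apply: lee_paddl => //; exact: le_trans (ZX n w) (lee_abs _).
  rewrite lte0_abs // addeC; apply: lee_paddl => //.
  rewrite -abseN; apply: le_trans (lee_abs _); by rewrite leeN2.
have cap00 : cap Pset set0 = 0.
  apply/eqP; rewrite eq_le; apply/andP; split.
    by apply: ge_ereal_sup => _ [P _ <-]; rewrite measure0.
  case: Pne => Q QQ; apply: le_trans (measure_ge0 Q set0) _.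
  by apply: ereal_sup_ubound; exists Q.
have L1GsZ n : L1Gstar Pset (Z n).
  split.
    split; first exact: mZ.
    have mY : measurable_fun setT (fun w => `|Y w|) := measurableT_comp (@abse_measurable R setT) hY.1.
    have mXn : measurable_fun setT (fun w => `|X n w|) := measurableT_comp (@abse_measurable R setT) (mX n).
    have h1 := @Ehat_le R d Pset _ _ (fun w => abse_ge0 (Z n w))
      (measurableT_comp (@abse_measurable R setT) (mZ n)) (emeasurable_funD mY mXn) (fun w => absZ n w).
    have h2 := @Ehat_add R d Pset _ _ (fun w => abse_ge0 (Y w)) (fun w => abse_ge0 (X n w)) mY mXn.
    exact: le_lt_trans h1 (le_lt_trans h2 (lte_add_pinfty hY.2 (hX n).1.2)).
  exists (fun m => minup (fun i => V (n + i)%N m) m); split.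
    by move=> m; apply: L1G_minup => // i; exact: (hV _).1.
  exists (\bigcup_k A k); split; first by apply: bigcupT_measurable => k; exact: (hA k).1.
  split; first by apply: cap_bigcup => // k; [exact: (hA k).1|exact: (hA k).2.1].
  move=> w nA.
  have hw k : (forall m, V k m.+1 w <= V k m w) /\ V k m w @[m --> \oo] --> X k w.
    by apply: (hA k).2.2 => Akw; apply: nA; exists k.
  have dec : forall m, minup (fun i => V (n + i)%N m.+1) m.+1 w <= minup (fun i => V (n + i)%N m) m w.
    move=> m /=; apply: (le_trans _ (@minup_mono R d (fun i => V (n + i)%N m.+1) (fun i => V (n + i)%N m) m w (fun i => (hw (n + i)%N).1 m))).
    by rewrite ge_min lexx.
  split; first exact: dec.
  have noninc : {homo (fun m => minup (fun i => V (n + i)%N m) m w) : a b / (a <= b)%N >-> b <= a}.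
    by apply/nonincreasing_seqP.
  have := ereal_nonincreasing_cvgn noninc.
  suff -> : ereal_inf (range (fun m => minup (fun i => V (n + i)%N m) m w)) = Z n w by [].
  apply/eqP; rewrite eq_le; apply/andP; split.
    apply: le_ereal_inf_tmp => _ [k /= nk <-].
    have cv := (hw k).2.
    rewrite -(cvg_lim _ cv) //; apply: lime_ge; first exact: cvgP cv.
    exists (k - n)%N => // m /= km.
    apply: le_trans (ereal_inf_lbound _) _; first by exists m.
    have := @minup_le R d (fun i => V (n + i)%N m) m w (k - n)%N km.
    by rewrite subnKC.
  apply: le_ereal_inf_tmp => _ [m _ <-]; apply: minup_ge => i im.
  apply: le_trans (_ : Z n w <= X (n + i)%N w) _.
    by apply: ereal_inf_lbound; exists (n + i)%N => //=; exact: leq_addr.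
  have cv := (hw (n + i)%N).2.
  rewrite -(cvg_lim _ cv) //; apply: lime_le; first exact: cvgP cv.
  exists m => // j /= mj.
  exact: (nonincreasing_seqP _).1 (hw (n + i)%N).1 _ _ mj.
have Zcv w : Z n w @[n --> \oo] --> limn_einf (fun n => X n w).
  rewrite limn_einf_lim; exact: is_cvg_einfs.
split; first by apply: emeasurable_fun_cvg mZ _ => w _; exact: Zcv.
exists Z; split; first exact: L1GsZ.
exists set0; split => //; split => // w _; split; last exact: Zcv.
by move=> n; apply: nondecreasing_einfs.
Qed.
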